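(* Let $M$ be a monoid that satisfies, for every $n\ge1$, the identity $$xy_1^2y_2^2\cdots y_{n-1}^2y_n^2x\approx xy_1^2y_2^2\cdots y_{n-1}^2y_nxy_n.$$ If the $\lambda$-class $bta^+b^+$ is a $\lambda$-term for $M$, then $M$ is non-finitely based (the monoid variety generated by $M$ has no finite identity basis).
   Context: Words are elements of the free monoid $\mathfrak A^*$ over a countably infinite alphabet. Let $\tau_1$ be the congruence on $\mathfrak A^*$ generated by $a=aa$ for all letters $a$. Define $\mathbf u\,\lambda\,\mathbf v$ iff $\mathbf u\,\tau_1\,\mathbf v$, $\mathbf u,\mathbf v$ have the same set of letters occurring at least twice, and for each such letter its first two occurrences are adjacent in $\mathbf u$ iff they are adjacent in $\mathbf v$. The notation $bta^+b^+$ denotes the $\lambda$-class $\{bta^kb^m:k\ge2,m\ge1\}$. A $\lambda$-class $\mathtt u$ is a $\lambda$-term for $M$ if for every word $\mathbf u\in\mathtt u$ and every word $\mathbf v$ such that $M$ satisfies $\mathbf u\approx\mathbf v$, we have $\mathbf u\,\lambda\,\mathbf v$. *)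

(* Defs.v *)
From mathcomp Require Import all_boot.
Set Implicit Arguments. Unset Strict Implicit. Unset Printing Implicit Defensive.

Definition word := seq nat.

Definition is_monoid (M : Type) (op : M -> M -> M) (e : M) : Prop :=
  (forall x y z, op x (op y z) = op (op x y) z) /\
  (forall x, op e x = x) /\ (forall x, op x e = x).

Definition evalw (M : Type) (op : M -> M -> M) (e : M) (phi : nat -> M)
  (w : word) : M := foldr (fun a m => op (phi a) m) e w.

Definition satisfies (M : Type) (op : M -> M -> M) (e : M) (u v : word) : Prop :=
  forall phi : nat -> M, evalw op e phi u = evalw op e phi v.

Definition subst (s : nat -> word) (w : word) : word := flatten (map s w).

Inductive derivable (Sigma : seq (word * word)) : word -> word -> Prop :=
  | der_refl u : derivable Sigma u u
  | der_sym u v : derivable Sigma u v -> derivable Sigma v u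
  | der_trans u v w : derivable Sigma u v -> derivable Sigma v w -> derivable Sigma u w
  | der_step (p q : word) (s : nat -> word) (st : word * word) :
      st \in Sigma ->
      derivable Sigma (p ++ subst s st.1 ++ q) (p ++ subst s st.2 ++ q).

Definition finitely_based (M : Type) (op : M -> M -> M) (e : M) : Prop :=
  exists Sigma : seq (word * word),
    (forall st, st \in Sigma -> satisfies op e st.1 st.2) /\
    (forall u v, satisfies op e u v -> derivable Sigma u v).

Inductive tau1 : word -> word -> Prop :=
  | tau1_refl u : tau1 u u
  | tau1_sym u v : tau1 u v -> tau1 v u
  | tau1_trans u v w : tau1 u v -> tau1 v w -> tau1 u w
  | tau1_step (p q : word) (a : nat) : tau1 (p ++ [:: a] ++ q) (p ++ [:: a; a] ++ q).

Definition multiple (x : nat) (w : word) : bool := 1 < count_mem x w.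

Definition first_two_adjacent (x : nat) (w : word) : bool :=
  nth 0 w (index x w).+1 == x.

Definition lambda_rel (u v : word) : Prop :=
  tau1 u v /\
  (forall x, multiple x u = multiple x v) /\
  (forall x, multiple x u -> first_two_adjacent x u = first_two_adjacent x v).

Definition lambda_term (M : Type) (op : M -> M -> M) (e : M) (cls : word -> Prop) : Prop :=
  forall u v, cls u -> satisfies op e u v -> lambda_rel u v.

Definition class_btab (a b t : nat) (w : word) : Prop :=
  exists k m, 2 <= k /\ 1 <= m /\ w = [:: b; t] ++ nseq k a ++ nseq m b.

(* The identities  x y1^2 ... y_{n-1}^2 y_n^2 x ~ x y1^2 ... y_{n-1}^2 y_n x y_n,
   with x = letter 0 and y_i = letter i. *)
Definition squares_prefix (n : nat) : word :=
  0 :: flatten [seq [:: i; i] | i <- iota 1 n.-1].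
Definition idn_lhs (n : nat) : word := squares_prefix n ++ [:: n; n; 0].
Definition idn_rhs (n : nat) : word := squares_prefix n ++ [:: n; 0; n].

(* Main.v *)
Require Import Defs.
From mathcomp Require Import all_boot.
From Stdlib Require Import Classical_Prop.
Set Implicit Arguments. Unset Strict Implicit. Unset Printing Implicit Defensive.

Fixpoint precb (C D : pred nat) (w : seq nat) : bool :=
  if w is c :: w' then ((~~ D c) || ~~ has C w') && precb C D w' else true.

Lemma precb_cat C D u v : precb C D (u ++ v) =
  [&& precb C D u, precb C D v & (~~ has D u) || ~~ has C v].
Proof.
elim: u => [|c u IH] /=; first by case: (precb C D v).
rewrite IH has_cat.
by case: (D c); case: (has C u); case: (has C v); case: (has D u);
   case: (precb C D u); case: (precb C D v).
Qed.

Lemma precb_noD C D w : ~~ has D w -> precb C D w.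
Proof. by elim: w => [|c w IH] //=; rewrite negb_or => /andP[-> /IH ->]. Qed.

Lemma precb_noC C D w : ~~ has C w -> precb C D w.
Proof.
elim: w => [|c w IH] //= H; have H' : ~~ has C w by move: H; case: (C c).
by rewrite H' orbT IH.
Qed.

Lemma has_sub (P Q : pred nat) w : subpred P Q -> has P w -> has Q w.
Proof. by move=> PQ /hasP[x xw /PQ Qx]; apply/hasP; exists x. Qed.

Lemma precb_sub C C' D D' w : subpred C' C -> subpred D' D ->
  precb C D w -> precb C' D' w.
Proof.
move=> sC sD; elim: w => [|c w IH] //= /andP[H1 /IH ->]; rewrite andbT.
case E: (D' c) => //=; move: H1; rewrite (sD _ E) /=; apply: contra.
exact: has_sub.
Qed.

Section Eval.
Variables (M : Type) (op : M -> M -> M) (e : M).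
Hypothesis Hm : is_monoid op e.

Lemma evalw_cat phi u v :
  evalw op e phi (u ++ v) = op (evalw op e phi u) (evalw op e phi v).
Proof.
case: Hm => As [Le Re].
elim: u => [|c u IH] /=; first by rewrite Le.
by rewrite IH As.
Qed.

Lemma evalw_subst phi th u :
  evalw op e phi (subst th u) = evalw op e (fun c => evalw op e phi (th c)) u.
Proof.
rewrite /subst; elim: u => [|c u IH] //=.
by rewrite evalw_cat IH.
Qed.

Lemma sat_sym u v : satisfies op e u v -> satisfies op e v u.
Proof. by move=> H phi; rewrite H. Qed.

Lemma sat_subst th u v : satisfies op e u v ->
  satisfies op e (subst th u) (subst th v).
Proof. by move=> H phi; rewrite !evalw_subst H. Qed.

Lemma sat_ctx p q u v : satisfies op e u v ->
  satisfies op e (p ++ u ++ q) (p ++ v ++ q).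
Proof. by move=> H phi; rewrite !evalw_cat H. Qed.

End Eval.

Fixpoint ddf (c : nat) (w : seq nat) : seq nat :=
  if w is d :: w' then (if d == c then ddf c w' else d :: ddf d w') else [::].
Definition dd (w : seq nat) := if w is c :: w' then c :: ddf c w' else [::].

Lemma ddf_dup c p x q : ddf c (p ++ x :: q) = ddf c (p ++ [:: x, x & q]).
Proof.
elim: p c => [|d p IH] c /=.
  by case E: (x == c) => //=; rewrite eqxx.
by case: (d == c); rewrite IH.
Qed.

Lemma dd_dup p x q : dd (p ++ x :: q) = dd (p ++ [:: x, x & q]).
Proof. case: p => [|d p] /=; [by rewrite eqxx | by rewrite ddf_dup]. Qed.

Lemma tau1_dd u v : tau1 u v -> dd u = dd v.
Proof.
elim=> [w|u' v' _ IH|u' v' w' _ IH1 _ IH2|p q x].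
- by [].
- by rewrite IH.
- by rewrite IH1 IH2.
- by rewrite /= dd_dup.
Qed.

Lemma ddf_nseq c i w : ddf c (nseq i c ++ w) = ddf c w.
Proof. by elim: i => [|i IH] //=; rewrite eqxx. Qed.

Lemma ddf_nil c w : ddf c w = [::] -> w = nseq (size w) c.
Proof.
elim: w => [|d w IH] //=; case E: (d == c) => //.
by move/eqP: E => -> /IH {1}->.
Qed.

Lemma ddf_cons c w d r : ddf c w = d :: r ->
  exists i w', w = nseq i c ++ d :: w' /\ ddf d w' = r.
Proof.
elim: w => [|d' w IH] //=; case E: (d' == c).
  by move/eqP: E => -> /IH [i [w' [-> <-]]]; exists i.+1, w'.
by case=> <- <-; exists 0, w.
Qed.

Lemma split_first (c : nat) w : c \in w -> exists w1 w2, w = w1 ++ c :: w2 /\ c \notin w1.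
Proof.
elim: w => [|d w IH] //; rewrite inE; case E: (c == d) => /=.
  by move=> _; exists [::], w; move/eqP: E => ->.
move=> /IH [w1 [w2 [-> H]]]; exists (d :: w1), w2; split => //.
by rewrite inE E.
Qed.

Lemma split_uniq (c : nat) w1 w2 v1 v2 : w1 ++ c :: w2 = v1 ++ c :: v2 ->
  c \notin w1 -> c \notin v1 -> w1 = v1 /\ w2 = v2.
Proof.
elim: w1 v1 => [|x w1 IH] [|y v1] //=.
- by case=> ->.
- by case=> -> _ _; rewrite inE eqxx.
- by case=> -> _; rewrite inE eqxx.
- case=> -> /IH H; rewrite !inE !negb_or => /andP[_ h1] /andP[_ h2].
  by case: (H h1 h2) => -> ->.
Qed.

Lemma split_cat (c : nat) w1 w2 A B : w1 ++ c :: w2 = A ++ B -> c \notin w1 ->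
  (exists A2, A = w1 ++ c :: A2 /\ w2 = A2 ++ B) \/
  (c \notin A /\ exists B1, w1 = A ++ B1 /\ B = B1 ++ c :: w2).
Proof.
move=> E h1; case hA: (c \in A).
  left; have [A1 [A2 [EA hA1]]] := split_first hA.
  move: E; rewrite EA -catA /= => /split_uniq [] // <- ->; by exists A2.
right; split => //.
have hB : c \in B.
  have : c \in A ++ B by rewrite -E mem_cat inE eqxx orbT.
  by rewrite mem_cat hA.
have [B1 [B2 [EB hB1]]] := split_first hB.
move: E; rewrite EB catA => /split_uniq [] //; first by rewrite mem_cat hA.
by move=> -> ->; exists B1.
Qed.

Lemma precbP (C D : pred nat) w :
  (forall X Y, w = X ++ Y -> has D X -> has C Y -> False) -> precb C D w.
Proof.
elim: w => [|c w IH] //= H; apply/andP; split.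
  case Dc: (D c) => //=; apply/negP => hC; apply: (H [:: c] w) => //=.
  by rewrite Dc.
apply: IH => X Y E hD hC; apply: (H (c :: X) Y) => //; first by rewrite E.
by rewrite /= hD orbT.
Qed.

Lemma ord_contra (C D : pred nat) X Y : precb C D (X ++ Y) -> has D X -> has C Y -> False.
Proof. by rewrite precb_cat => /and3P[_ _]; case: (has D X); case: (has C Y). Qed.

Lemma precb_mid (C D : pred nat) X Y Z : precb C D (X ++ Y ++ Z) -> precb C D Y.
Proof. by rewrite !precb_cat => /and3P[_ /and3P[]]. Qed.

Lemma precb_replace (C D : pred nat) X m m' Y :
  precb C D (X ++ m ++ Y) -> precb C D m' ->
  (has C m' -> has C m) -> (has D m' -> has D m) -> precb C D (X ++ m' ++ Y).
Proof.
rewrite !precb_cat => /and3P[-> /and3P[_ -> h3] h4] -> /implyP hC /implyP hD /=.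
move: h3 h4 hC hD; rewrite !has_cat.
by case: (has D X); case: (has C m); case: (has C m'); case: (has D m);
   case: (has D m'); case: (has C Y).
Qed.

Lemma notin_take_find (P : pred nat) s : ~~ has P (take (find P s) s).
Proof. by elim: s => [|x s IH] //=; case E: (P x) => //=; rewrite E IH. Qed.

Lemma mem_le_foldr y s : y \in s -> y <= foldr maxn 0 s.
Proof.
elim: s => [|x s IH] //=; rewrite inE => /orP[/eqP ->|/IH h].
  exact: leq_maxl.
exact: leq_trans h (leq_maxr _ _).
Qed.
Section Cls.
Variables (M : Type) (op : M -> M -> M) (e : M).
Hypothesis Hm : is_monoid op e.
Variables a b t : nat.
Hypotheses (hab : a != b) (hat : a != t) (hbt : b != t).
Hypothesis Hlam : lambda_term op e (class_btab a b t).

Lemma sat_class u v : satisfies op e u v -> class_btab a b t u -> class_btab a b t v.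
Proof.
move=> H Hu; have [Ht [Hmul Hadj]] := Hlam Hu H.
case: Hu => k [m [hk [hm Eu]]].
have hba : b != a by rewrite eq_sym.
have hta : t != a by rewrite eq_sym.
have htb : t != b by rewrite eq_sym.
have ddu : dd u = [:: b; t; a; b].
  rewrite Eu; case: k hk Eu => [|[|k]] // _ _; case: m hm => [|m] // _.
  rewrite /= (negbTE htb) (negbTE hat) /= eqxx.
  by rewrite ddf_nseq /= (negbTE hba) -[nseq m b]cats0 ddf_nseq.
have := tau1_dd Ht; rewrite ddu; clear Ht H; case: v Hmul Hadj => [|c v] //= Hmul Hadj.
case=> Ec /esym /ddf_cons [i1 [w1 [Ev1 /ddf_cons [i2 [w2 [Ev2 /ddf_cons [i3 [w3 [Ev3 /ddf_nil Ev4]]]]]]]]].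
rewrite Ev1 Ev2 Ev3 Ev4 -Ec in Hmul Hadj *.
move: (size w3) Hmul Hadj => s3 Hmul Hadj; clear Ev1 Ev2 Ev3 Ev4.
have mt := Hmul t; have mb := Hmul b; have ma := Hmul a; have fb := Hadj b.
move: mt mb ma fb; clear Hmul Hadj; rewrite Eu /multiple /first_two_adjacent /=.
do 4 rewrite ?count_cat ?count_nseq /= ?eqxx ?(negbTE hbt) ?(negbTE hat) ?(negbTE hta)
  ?(negbTE htb) ?(negbTE hab) ?(negbTE hba) /=.
rewrite ?mul1n ?mul0n ?add0n ?addn0.
case: i2 => [|i2]; last by rewrite ltnn addSn ltnS addnS.
move=> _ _.
case: i1 => [|i1] /=; last by rewrite eqxx; clear Eu; case: m hm => [|m] // _ _ /(_ isT).
move=> Ha _; exists i3.+1, s3.+1; split; last by [].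
by clear Eu; case: i3 Ha => [|i3] //; case: k hk => [|[|k]].
Qed.

Definition psi2 (C D : pred nat) (y : nat) : word :=
  if C y then [:: a; a] else if D y then [:: b] else [::].

Lemma subst_cons th c u : subst th (c :: u) = th c ++ subst th u.
Proof. by []. Qed.

Lemma subst_cat th u v : subst th (u ++ v) = subst th u ++ subst th v.
Proof. by rewrite /subst map_cat flatten_cat. Qed.

Lemma psi2_shape (C D : pred nat) u : (forall y, C y -> ~~ D y) -> precb C D u ->
  subst (psi2 C D) u = nseq (2 * count C u) a ++ nseq (count D u) b.
Proof.
move=> disj; elim: u => [|c u IH] //= /andP[H1 H2].
rewrite subst_cons IH // /psi2; case Cc: (C c).
  rewrite (negbTE (disj _ Cc)) add0n mulnDr muln1.
  by rewrite (addSn 1) (addSn 0) add0n.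
case Dc: (D c); last by rewrite !add0n.
move: H1; rewrite Dc /= => hC.
have -> : count C u = 0 by apply/eqP; rewrite -leqn0 leqNgt -has_count.
by rewrite add0n.
Qed.

Lemma has_psi2_a (C D : pred nat) u : has C u -> has (pred1 a) (subst (psi2 C D) u).
Proof.
elim: u => [|c u IH] //=; rewrite subst_cons has_cat; case/orP => [Cc|/IH ->].
  by rewrite /psi2 Cc /= eqxx.
by rewrite orbT.
Qed.

Lemma psi2_precb (C D : pred nat) u : (forall y, C y -> ~~ D y) ->
  precb (pred1 a) (pred1 b) (subst (psi2 C D) u) -> precb C D u.
Proof.
move=> disj; elim: u => [|c u IH] //=; rewrite subst_cons precb_cat.
case/and3P=> _ /IH -> H3; rewrite andbT.
case Dc: (D c) => //=.
have nC : ~~ C c by apply: contraT; rewrite negbK => /disj; rewrite Dc.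
move: H3; rewrite /psi2 (negbTE nC) Dc /= eqxx /=.
by apply: contra => /has_psi2_a; apply.
Qed.

Lemma precb_ab k m : precb (pred1 a) (pred1 b) (nseq k a ++ nseq m b).
Proof.
have h1 : ~~ has (pred1 b) (nseq k a) by rewrite has_nseq /= (negbTE hab) andbF.
have h2 : ~~ has (pred1 a) (nseq m b) by rewrite has_nseq /= eq_sym (negbTE hab) andbF.
by rewrite precb_cat h1 precb_noD // precb_noC.
Qed.

Lemma cls_ctx u v p q th : satisfies op e u v ->
  class_btab a b t (p ++ subst th u ++ q) -> class_btab a b t (p ++ subst th v ++ q).
Proof. by move=> H; apply: sat_class; apply: sat_ctx => //; apply: sat_subst. Qed.

Lemma sat_mem u v c : satisfies op e u v -> c \in u -> c \in v.
Proof.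
move=> H cu.
have disj : forall y, pred1 c y -> ~~ (@pred0 nat) y by [].
have Pu : precb (pred1 c) pred0 u by apply: precb_noD; rewrite has_pred0.
have Pv : precb (pred1 c) pred0 v by apply: precb_noD; rewrite has_pred0.
have := @cls_ctx u v [:: b; t] [:: b] (psi2 (pred1 c) pred0) H.
rewrite !psi2_shape // !count_pred0 /= !cats0.
have cu' : 0 < count (pred1 c) u by rewrite -has_count has_pred1.
move=> Himp.
have /Himp [k [m [hk [hm E]]]] :
    class_btab a b t [:: b, t & nseq (2 * count_mem c u) a ++ [:: b]].
  exists (2 * count_mem c u), 1; split; last by [].
  by rewrite -{1}(muln1 2) leq_mul2l.
rewrite -has_pred1 has_count lt0n; apply/eqP => E0; move: E; rewrite E0 /=.
by move/(congr1 size) => /=; rewrite size_cat !size_nseq; case: k hk => [|[|k]].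
Qed.

Lemma sat_has u v (P : pred nat) : satisfies op e u v -> has P u -> has P v.
Proof.
move=> H /hasP[x xu Px]; apply/hasP; exists x => //; exact: sat_mem H xu.
Qed.

Lemma sat_precb u v (C D : pred nat) : (forall y, C y -> ~~ D y) ->
  satisfies op e u v -> precb C D u -> precb C D v.
Proof.
move=> disj H Pu.
case hC: (has C v); last by apply: precb_noC; rewrite hC.
case hD: (has D v); last by apply: precb_noD; rewrite hD.
have H' := sat_sym H.
have hCu := sat_has H' hC; have hDu := sat_has H' hD.
have := @cls_ctx u v [:: b; t] [::] (psi2 C D) H.
rewrite !cats0 (psi2_shape disj Pu) => Himp.
have /Himp [k [m [hk [hm E]]]] :
    class_btab a b t ([:: b; t] ++ nseq (2 * count C u) a ++ nseq (count D u) b).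
  exists (2 * count C u), (count D u); split; last split => //.
    by rewrite -{1}(muln1 2) leq_mul2l -has_count hCu.
  by rewrite -has_count.
apply: (psi2_precb disj); move: E => -[->]; exact: precb_ab.
Qed.

Lemma subst_ind x c w :
  subst (fun y => if y == c then [:: x] else [::]) w = nseq (count_mem c w) x.
Proof.
elim: w => [|y w IH] //=; rewrite subst_cons IH.
by case: (y == c).
Qed.

Lemma sat_once u v c : satisfies op e u v -> count_mem c u = 1 -> count_mem c v = 1.
Proof.
move=> H cu.
have := @cls_ctx u v [:: b] [:: a; a; b] (fun y => if y == c then [:: t] else [::]) H.
rewrite !subst_ind cu => Himp.
have /Himp [k [m [hk [hm E]]]] : class_btab a b t ([:: b] ++ nseq 1 t ++ [:: a; a; b]).
  by exists 2, 1.
move: E; case: (count_mem c v) => [|[|n]] //=.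
  case=> E1; move: hat; rewrite E1 eqxx //.
by case: k hk => [|[|k]] // _ [] E1; move: hat; rewrite E1 eqxx.
Qed.

Lemma cls_split A B : class_btab a b t (A ++ t :: B) -> t \notin A ->
  A = [:: b] /\ exists k m, [/\ 2 <= k, 1 <= m & B = nseq k a ++ nseq m b].
Proof.
case=> k [m [hk [hm E]]]; case: A E => [|x [|y A]] /=.
- by case=> /eqP; rewrite eq_sym (negbTE hbt).
- by case=> -> -> _; split => //; exists k, m.
- case=> _ -> _; by rewrite !inE eqxx orbT.
Qed.

Definition Zc (n : nat) (w : word) : Prop :=
  exists w1 w2, [/\ w = w1 ++ 0 :: w2, 0 \notin w1, n \notin w1 &
     [/\ precb (pred1 n) (pred1 0) w2, n \in w2 & 0 \in w2]].

Definition inS (n : nat) (w : word) : Prop :=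
  [/\ forall c, (c \in w) = (c <= n),
      forall i j, 0 < i -> i < j -> j <= n -> precb (pred1 i) (pred1 j) w,
      precb (pred1 1) (pred1 0) w = false & Zc n w].

Lemma subst_comp_in (th psi sg : nat -> word) s :
  (forall v, v \in s -> th v = subst psi (sg v)) -> subst th s = subst psi (subst sg s).
Proof.
elim: s => [|v s IH] //= H; rewrite !subst_cons subst_cat H ?inE ?eqxx // IH //.
by move=> x xs; apply: H; rewrite inE xs orbT.
Qed.

Lemma psi2_not_t (C D : pred nat) X : t \notin subst (psi2 C D) X.
Proof.
elim: X => [|c X IH] //=; rewrite subst_cons mem_cat negb_or IH andbT /psi2.
case: (C c); first by rewrite !inE !negb_or ![t == a]eq_sym hat.
by case: (D c); rewrite // inE eq_sym hbt.
Qed.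

Lemma count_psi2_b (C D : pred nat) X : (forall y, C y -> ~~ D y) ->
  count_mem b (subst (psi2 C D) X) = count D X.
Proof.
move=> disj; elim: X => [|c X IH] //=; rewrite subst_cons count_cat IH /psi2.
case Cc: (C c); first by rewrite (negbTE (disj _ Cc)) /= (negbTE hab).
by case: (D c) => /=; rewrite ?eqxx.
Qed.

Lemma cls_count_t w : class_btab a b t w -> count_mem t w = 1.
Proof.
case=> k [m [_ [_ ->]]]; rewrite /= count_cat !count_nseq /= eqxx.
have h1 : (t == a) = false by rewrite eq_sym (negbTE hat).
have h2 : (t == b) = false by rewrite eq_sym (negbTE hbt).
by rewrite (negbTE hat) (negbTE hbt) !mul0n.
Qed.

Lemma hard_case n N0 l r sg p q m1 m2 :
  satisfies op e l r -> (forall y, y \in l -> y < N0) -> N0 < n -> 1 < n ->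
  (forall c, (c \in p ++ subst sg l ++ q) = (c <= n)) ->
  (forall i j, 0 < i -> i < j -> j <= n ->
     precb (pred1 i) (pred1 j) (p ++ subst sg l ++ q)) ->
  precb (pred1 1) (pred1 0) (p ++ subst sg l ++ q) = false ->
  subst sg l = m1 ++ 0 :: m2 -> 0 \notin p -> 0 \notin m1 -> n \notin p ++ m1 ->
  precb (pred1 n) (pred1 0) (m2 ++ q) -> n \in m2 ++ q -> 0 \in m2 ->
  Zc n (p ++ subst sg r ++ q).
Proof.
move=> Hs Hl HN0 Hn1 Hcont Hord H10 Em h0p h0m1 hnpm1 Hpw2 hnw2 h0m2.
set m := subst sg l in Hcont Hord H10 Em.
have Ew : p ++ m ++ q = (p ++ m1) ++ 0 :: (m2 ++ q) by rewrite Em -!catA /= -?catA.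
have Oc : forall i j X Y, 0 < i -> i < j -> j <= n -> p ++ m ++ q = X ++ Y ->
    j \in X -> i \in Y -> False.
  move=> i j X Y hi hij hjn E hjX hiY.
  apply: (@ord_contra (pred1 i) (pred1 j) X Y); rewrite ?has_pred1 //.
  by rewrite -E; apply: Hord.
have n0 : (n == 0) = false by case: n Hn1 {HN0 Hcont Hord Oc hnpm1 Hpw2 hnw2}.
have hnm2 : n \in m2.
  move: hnw2; rewrite mem_cat; case/orP => // hnq; exfalso.
  by apply: (ord_contra Hpw2); rewrite has_pred1.
have h1m2 : 1 \in m2.
  have h1w2 : 1 \in m2 ++ q.
    apply/negPn/negP => h1; move: H10; rewrite Ew precb_cat.
    rewrite precb_noD ?has_pred1 ?mem_cat ?negb_or ?h0p //=.
    by rewrite precb_noC /= ?has_pred1 // h1 /= orbT.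
  move: h1w2; rewrite mem_cat; case/orP => // h1q; exfalso.
  apply: (Oc 1 n ((p ++ m1) ++ 0 :: m2) q) => //.
    by rewrite Ew -!catA /= -?catA.
  by rewrite mem_cat inE hnm2 !orbT.
have him2 : forall i, 0 < i -> i <= n -> i \in m2.
  move=> i hi hin; case: (ltngtP i n) => [hlt| |->] //; last by rewrite ltnNge hin.
  case: (ltngtP 1 i) => [h1i| |<-] //; last by rewrite ltnNge hi.
  have : i \in p ++ m ++ q by rewrite Hcont.
  have i0 : (i == 0) = false by case: i hi {hin hlt h1i}.
  rewrite Ew mem_cat mem_cat inE i0 /= mem_cat.
  case/orP => [/orP[hiX|hiX]|/orP[//|hiX]]; exfalso.
  - apply: (Oc 1 i (p ++ m1) (0 :: m2 ++ q) isT h1i (ltnW hlt) Ew).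
      by rewrite mem_cat hiX.
    by rewrite inE mem_cat h1m2 orbT.
  - apply: (Oc 1 i (p ++ m1) (0 :: m2 ++ q) isT h1i (ltnW hlt) Ew).
      by rewrite mem_cat hiX orbT.
    by rewrite inE mem_cat h1m2 orbT.
  - apply: (Oc i n ((p ++ m1) ++ 0 :: m2) q) => //.
      by rewrite Ew -!catA /= -?catA.
    by rewrite mem_cat inE hnm2 !orbT.
have hmem : forall y, y \in m -> y <= n.
  by move=> y ym; rewrite -Hcont !mem_cat ym orbT.
(* pigeonhole *)
have [z [zl [j [k [hj hjk hkn jz kz]]]]] :
    exists z, z \in l /\ exists j k, [/\ 0 < j, j < k, k <= n, j \in sg z & k \in sg z].
  apply: NNPP => Hno.
  have hz : forall i, 0 < i -> i <= n -> has (fun z => i \in sg z) l.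
    move=> x hx hxn; have : x \in m by rewrite Em mem_cat inE (him2 x hx hxn) !orbT.
    by case/flatten_mapP => z zl iz; apply/hasP; exists z.
  pose f i := nth 0 l (find (fun z => i \in sg z) l).
  have fl : forall i, 0 < i -> i <= n -> f i \in l /\ i \in sg (f i).
    move=> i hi hin; have H := hz i hi hin; split.
      by apply: mem_nth; rewrite -has_find.
    exact: (nth_find 0 H).
  have inj : {in iota 1 n &, injective f}.
    move=> i i'; rewrite !mem_iota add1n !ltnS => /andP[hi hin] /andP[hi' hin'] E.
    case: (ltngtP i i') => // hii'; exfalso; apply: Hno.
      have [fi ifi] := fl i hi hin; have [_ ifi'] := fl i' hi' hin'.
      exists (f i); split => //; exists i, i'; split => //; by rewrite E.
    have [fi ifi] := fl i hi hin; have [_ ifi'] := fl i' hi' hin'.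
    exists (f i); split => //; exists i', i; split => //; by rewrite E.
  have := @uniq_leq_size _ (map f (iota 1 n)) (iota 0 N0).
  rewrite (map_inj_in_uniq inj) iota_uniq size_map !size_iota => /(_ isT) H.
  have : n <= N0.
    apply: H => x /mapP [i]; rewrite mem_iota add1n ltnS => /andP[hi hin] ->.
    by rewrite mem_iota add0n; apply: Hl; case: (fl i hi hin).
  by rewrite leqNgt HN0.
have hjn : j < n by apply: leq_trans hkn.
have [s1 [s2 [El hzs1]]] := split_first zl.
have Em2 : m = subst sg s1 ++ sg z ++ subst sg s2 by rewrite /m El subst_cat subst_cons.
have hzs2 : z \notin s2.
  apply/negP => zs2.
  have jY : j \in subst sg s2 by apply/flatten_mapP; exists z.
  apply: (Oc j k (p ++ subst sg s1 ++ sg z) (subst sg s2 ++ q) hj hjk hkn).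
  - by rewrite Em2 -!catA /= -?catA.
  - by rewrite !mem_cat kz !orbT.
  - by rewrite mem_cat jY.
pose P := fun y => j < y.
have hP : has P (sg z) by apply/hasP; exists k.
pose l1 := take (find P (sg z)) (sg z).
pose y0 := nth 0 (sg z) (find P (sg z)).
pose l2' := drop (find P (sg z)).+1 (sg z).
have Py0 : P y0 by apply: nth_find.
have Ez : sg z = l1 ++ y0 :: l2'.
  by rewrite -drop_nth ?cat_take_drop // -has_find.
have hl1 : ~~ has P l1 by apply: notin_take_find.
have Em3 : m = subst sg s1 ++ l1 ++ y0 :: l2' ++ subst sg s2.
  by rewrite Em2 Ez -!catA /= -?catA.
have y0n : y0 <= n by apply: hmem; rewrite Em3 !mem_cat inE eqxx !orbT.
have hj1 : j \in l1.
  have : j \in sg z by [].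
  rewrite Ez mem_cat inE; case/or3P => // H; exfalso.
    by move: Py0; rewrite /P -(eqP H) ltnn.
  apply: (Oc j y0 (p ++ subst sg s1 ++ l1 ++ [:: y0]) (l2' ++ subst sg s2 ++ q) hj Py0 y0n).
  - by rewrite Em3 -!catA /= -?catA.
  - by rewrite !mem_cat inE eqxx !orbT.
  - by rewrite mem_cat H.
pose L := subst sg s1 ++ l1.
pose R := y0 :: l2' ++ subst sg s2.
have EmLR : m = L ++ R by rewrite Em3 /L /R -!catA /= -?catA.
have hLP : ~~ has P L.
  rewrite has_cat negb_or hl1 andbT; apply/hasP => -[y ys1 Py].
  have yn : y <= n by apply: hmem; rewrite EmLR mem_cat /L mem_cat ys1.
  apply: (Oc j y (p ++ subst sg s1) (l1 ++ R ++ q) hj Py yn).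
  - by rewrite EmLR /L -!catA /= -?catA.
  - by rewrite mem_cat ys1 orbT.
  - by rewrite mem_cat hj1.
have hnL : n \notin L.
  by apply: contra hLP => hn; apply/hasP; exists n.
have hnR : n \in R.
  have : n \in m by rewrite Em mem_cat inE hnm2 !orbT.
  by rewrite EmLR mem_cat (negbTE hnL).
have y00 : (y0 == 0) = false by case: y0 Py0 {y0n Ez Em3 R EmLR hnR}.
have [L2 [EL EM2]] : exists L2, L = m1 ++ 0 :: L2 /\ m2 = L2 ++ R.
  have := @split_cat 0 m1 m2 L R (etrans (esym Em) EmLR) h0m1.
  case=> [[A2 [-> ->]]|[h0L [B1 [E1 E2]]]]; first by exists A2.
  exfalso; case: B1 E1 E2 => [|y B1] E1; first by case=> Ey; move: y00; rewrite Ey.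
  case=> Ey _; apply: (Oc 1 y0 (p ++ m1) (0 :: m2 ++ q) isT (leq_trans (hj : 1 < j.+1) Py0) y0n Ew).
  - by rewrite mem_cat E1 mem_cat Ey inE eqxx !orbT.
  - by rewrite inE mem_cat h1m2 orbT.
have h0L2 : 0 \notin L2.
  apply/negP => h0L2; move: Hpw2; rewrite EM2 -catA => /ord_contra; apply.
    by rewrite has_pred1.
  by rewrite has_pred1 mem_cat hnR.
have hRprec : precb P (pred1 0) R.
  apply: precbP => X Y ER hX /hasP [y yY Py].
  have hnY : n \notin Y ++ q.
    apply/negP => hn; move: Hpw2; rewrite EM2 ER -!catA catA => /ord_contra; apply.
      by rewrite has_cat hX orbT.
    by rewrite has_pred1.
  have yn : y <= n by apply: hmem; rewrite EmLR ER !mem_cat yY !orbT.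
  case: (ltngtP y n) yn => [hyn _| |Eyn _] //; last first.
    by move: hnY; rewrite -Eyn mem_cat yY.
  have hnLX : n \in L2 ++ X.
    move: hnm2 hnY; rewrite EM2 ER !mem_cat.
    by case: (n \in L2); case: (n \in X); case: (n \in Y).
  apply: (Oc y n (p ++ m1 ++ 0 :: L2 ++ X) (Y ++ q) (leq_trans hj (ltnW Py)) hyn (leqnn n)).
  - by rewrite Em EM2 ER -!catA /= -?catA.
  - by move: hnLX; rewrite !mem_cat inE !mem_cat => /orP[] ->; rewrite !orbT.
  - by rewrite mem_cat yY.
have h0R : 0 \in R.
  by move: h0m2; rewrite EM2 mem_cat (negbTE h0L2).
have c0L : count_mem 0 L = 1.
  by rewrite EL count_cat /= (count_memPn h0m1) (count_memPn h0L2).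
have disj : forall y, P y -> ~~ pred1 0 y.
  by move=> y Py; rewrite /= -lt0n; apply: leq_ltn_trans Py.
pose psi := psi2 P (pred1 0).
have hpsiL : subst psi L = [:: b].
  rewrite (psi2_shape disj (precb_noC (pred1 0) hLP)).
  have -> : count P L = 0 by apply/eqP; rewrite -leqn0 leqNgt -has_count.
  by rewrite c0L.
have hpsiR := psi2_shape disj hRprec.
pose th := fun v => if v == z then subst psi l1 ++ t :: subst psi (y0 :: l2')
                    else subst psi (sg v).
have th_out : forall s, z \notin s -> subst th s = subst psi (subst sg s).
  move=> s0 hs0; apply: subst_comp_in => v vs; rewrite /th.
  by case: eqP => // Ev; move: hs0; rewrite -Ev vs.
have hthl : subst th l = subst psi L ++ t :: subst psi R.
  rewrite El subst_cat subst_cons (th_out _ hzs1) (th_out _ hzs2) /th eqxx.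
  by rewrite /L /R !subst_cat !subst_cons !subst_cat -!catA /= -?catA.
have hcl : class_btab a b t (subst th l).
  rewrite hthl hpsiL hpsiR; exists (2 * count P R), (count (pred1 0) R).
  split; last split => //.
    by rewrite -{1}(muln1 2) leq_mul2l -has_count; apply/hasP; exists y0;
      rewrite ?inE ?eqxx.
  by rewrite -has_count has_pred1.
have hcr : class_btab a b t (subst th r).
  by have := @cls_ctx l r [::] [::] th Hs; rewrite /= !cats0; apply.
have cnt_th : forall s0, count_mem t (subst th s0) = count_mem z s0.
  elim=> [|v s0 IH] //=; rewrite subst_cons count_cat IH /th; congr (_ + _).
  case E: (v == z).
    rewrite count_cat /= eqxx (count_memPn (psi2_not_t _ _ _)).
    by rewrite (count_memPn (psi2_not_t _ _ _)).
  by apply/count_memPn; apply: psi2_not_t.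
have czr : count_mem z r = 1 by rewrite -cnt_th; apply: cls_count_t.
have zr : z \in r by rewrite -has_pred1 has_count czr.
have [r1 [r2 [Er hzr1]]] := split_first zr.
have hzr2 : z \notin r2.
  apply/count_memPn; move: czr; rewrite Er count_cat /= eqxx (count_memPn hzr1).
  by rewrite add0n add1n => -[].
pose X1 := subst sg r1 ++ l1.
pose X2 := y0 :: l2' ++ subst sg r2.
have Emr : subst sg r = X1 ++ X2.
  by rewrite Er subst_cat subst_cons Ez /X1 /X2 -!catA /= -?catA.
have hthr : subst th r = subst psi X1 ++ t :: subst psi X2.
  rewrite Er subst_cat subst_cons (th_out _ hzr1) (th_out _ hzr2) /th eqxx.
  by rewrite /X1 /X2 !subst_cat !subst_cons !subst_cat -!catA /= -?catA.
have [hX1 [k' [mm [hk' hmm hX2]]]] : subst psi X1 = [:: b] /\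
    exists k m, [/\ 2 <= k, 1 <= m & subst psi X2 = nseq k a ++ nseq m b].
  by apply: cls_split; [rewrite -hthr | apply: psi2_not_t].
have hX1P : ~~ has P X1.
  apply/negP => /(has_psi2_a (pred1 0)); rewrite -/psi hX1 /=.
  by rewrite eq_sym (negbTE hab).
have c0X1 : count_mem 0 X1 = 1.
  by rewrite -(count_psi2_b X1 disj) -/psi hX1 /= ?eqxx.
have h0X1 : 0 \in X1 by rewrite -has_pred1 has_count c0X1.
have [X1a [X1b [EX1 h0X1a]]] := split_first h0X1.
have h0X1b : 0 \notin X1b.
  apply/count_memPn; move: c0X1; rewrite EX1 count_cat /= (count_memPn h0X1a).
  by rewrite add0n add1n => -[].
have hX2prec : precb P (pred1 0) X2.
  by apply: (psi2_precb disj); rewrite -/psi hX2; apply: precb_ab.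
have h0X2 : 0 \in X2.
  rewrite -has_pred1 has_count -(count_psi2_b X2 disj) -/psi hX2 count_cat !count_nseq.
  by rewrite /= eqxx (negbTE hab) mul0n add0n mul1n.
have hnX1 : n \notin X1 by apply: contra hX1P => hn; apply/hasP; exists n.
have hnm' : n \in subst sg r.
  apply: (sat_mem (sat_subst Hm sg Hs)).
  by rewrite -/m Em mem_cat inE hnm2 !orbT.
have Hq : precb (pred1 n) (pred1 0) q /\ n \notin q.
  move: Hpw2; rewrite precb_cat => /and3P[_ -> H3]; split => //.
  by move: H3; rewrite has_pred1 h0m2 /= has_pred1.
case: Hq => Hq hnq.
exists (p ++ X1a), (X1b ++ X2 ++ q); split.
- by rewrite Emr EX1 -!catA /= -?catA.
- by rewrite mem_cat negb_or h0p.
- rewrite mem_cat negb_or; apply/andP; split.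
    by apply: contra hnpm1; rewrite mem_cat => ->.
  by apply: contra hnX1; rewrite EX1 mem_cat => ->.
split.
- have h1 : precb (pred1 n) (pred1 0) X2.
    by apply: (precb_sub _ _ hX2prec) => // y /eqP ->.
  have HX2q : precb (pred1 n) (pred1 0) (X2 ++ q).
    by rewrite precb_cat h1 Hq !has_pred1 (negbTE hnq) orbT.
  have h0b : ~~ has (pred1 0) X1b by rewrite has_pred1.
  by rewrite precb_cat HX2q (precb_noD _ h0b) h0b.
- rewrite !mem_cat; apply/orP; right; apply/orP; left.
  by move: hnm'; rewrite Emr mem_cat (negbTE hnX1).
- by rewrite !mem_cat h0X2 orbT.
Qed.

Lemma step_inS n N0 l r sg p q :
  satisfies op e l r -> (forall y, y \in l -> y < N0) -> N0 < n -> 1 < n ->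
  inS n (p ++ subst sg l ++ q) -> inS n (p ++ subst sg r ++ q).
Proof.
move=> Hs Hl HN0 Hn1 [Hcont Hord H10 HZ].
set m := subst sg l in Hcont Hord H10 HZ *.
set m' := subst sg r.
have Hsm : satisfies op e m m' by apply: sat_subst.
have Hsm' := sat_sym Hsm.
have Hw : satisfies op e (p ++ m ++ q) (p ++ m' ++ q) by apply: sat_ctx.
have Hw' := sat_sym Hw.
have memm : forall c, (c \in m') = (c \in m).
  by move=> c; apply/idP/idP; [apply: sat_mem Hsm' | apply: sat_mem Hsm].
have n0 : (n == 0) = false by case: n Hn1 {HN0 Hcont Hord H10 HZ}.
split.
- move=> c; rewrite -Hcont; apply/idP/idP; [apply: sat_mem Hw' | apply: sat_mem Hw].
- move=> i j hi hij hjn; apply: (sat_precb _ Hw); last exact: Hord.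
  by move=> y /= /eqP ->; rewrite neq_ltn hij.
- apply/negP => H; move: H10; rewrite (sat_precb _ Hw' H) //.
  by move=> y /= /eqP ->.
case: HZ => w1 [w2 [Ew h0w1 hnw1 [Hpw2 hnw2 h0w2]]].
case: (@split_cat 0 w1 w2 p (m ++ q) (esym Ew) h0w1).
  (* first 0 in p *)
  case=> p2 [Ep Ew2]; exists w1, (p2 ++ m' ++ q); split => //.
    by rewrite Ep -!catA.
  split.
  - apply: (@precb_replace _ _ p2 m); first by rewrite -Ew2.
    + by apply: (sat_precb _ Hsm); [move=> y /eqP ->; rewrite /= n0 |
         move: Hpw2; rewrite Ew2 => /precb_mid].
    + by move=> /hasP[x xm' Px]; apply/hasP; exists x; rewrite // -memm.
    + by move=> /hasP[x xm' Px]; apply/hasP; exists x; rewrite // -memm.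
  - by move: hnw2; rewrite Ew2 !mem_cat memm.
  - by move: h0w2; rewrite Ew2 !mem_cat memm.
case=> h0p [B1 [Ew1 EB]].
case: (@split_cat 0 B1 w2 m q (esym EB)).
  by apply: contra h0w1; rewrite Ew1 mem_cat => ->; rewrite orbT.
  case=> m2 [Em Ew2].
  case h0m2: (0 \in m2).
    apply: (hard_case Hs Hl HN0 Hn1 Hcont Hord H10 Em h0p) => //.
    - by apply: contra h0w1; rewrite Ew1 mem_cat => ->; rewrite orbT.
    - by rewrite -Ew1.
    - by rewrite -Ew2.
    - by rewrite -Ew2.
  (* exactly one zero in m *)
  have h0B1 : 0 \notin B1 by apply: contra h0w1; rewrite Ew1 mem_cat => ->; rewrite orbT.
  have c0m : count_mem 0 m = 1.
    by rewrite Em count_cat /= (count_memPn h0B1) (count_memPn (negbT h0m2)).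
  have c0m' := sat_once Hsm c0m.
  have h0m' : 0 \in m' by rewrite -has_pred1 has_count c0m'.
  have [m1' [m2' [Em' h0m1']]] := split_first h0m'.
  have h0m2' : 0 \notin m2'.
    apply/count_memPn; move: c0m'; rewrite Em' count_cat /= (count_memPn h0m1').
    by rewrite add0n add1n => -[].
  have hnB1 : n \notin B1 by apply: contra hnw1; rewrite Ew1 mem_cat => ->; rewrite orbT.
  have P0n : precb (pred1 0) (pred1 n) m.
    have hb : ~~ has (pred1 n) B1 by rewrite has_pred1.
    rewrite Em precb_cat (precb_noD _ hb) hb /= andbT.
    by rewrite eq_sym n0 /= precb_noC // has_pred1 h0m2.
  have P0n' : precb (pred1 0) (pred1 n) m'.
    by apply: (sat_precb _ Hsm P0n) => y /eqP -> /=; rewrite eq_sym n0.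
  have hnm1' : n \notin m1'.
    move: P0n'; rewrite Em' precb_cat => /and3P[_ _].
    by rewrite !has_pred1 inE eqxx /= orbF.
  exists (p ++ m1'), (m2' ++ q); split.
  - by rewrite Em' -!catA.
  - by rewrite mem_cat negb_or h0p.
  - by rewrite mem_cat negb_or hnm1' andbT; apply: contra hnw1; rewrite Ew1 mem_cat => ->.
  split.
  - move: Hpw2; rewrite Ew2 !precb_cat => /and3P[_ -> _].
    have hb : ~~ has (pred1 0) m2' by rewrite has_pred1.
    by rewrite (precb_noD _ hb) hb.
  - move: hnw2; rewrite Ew2 !mem_cat => /orP[hn|->]; last by rewrite orbT.
    have : n \in m by rewrite Em mem_cat inE hn !orbT.
    move/(sat_mem Hsm); rewrite Em' mem_cat inE (negbTE hnm1') n0 /=.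
    by move=> ->.
  - by move: h0w2; rewrite Ew2 !mem_cat h0m2 (negbTE h0m2').
(* no zero in m *)
case=> h0m [q1 [EB1 Eq]].
have hnm : n \notin m by apply: contra hnw1; rewrite Ew1 EB1 !mem_cat => ->; rewrite orbT.
exists (p ++ m' ++ q1), w2; split => //.
- by rewrite Eq -!catA.
- by rewrite !mem_cat memm; apply: contra h0w1; rewrite Ew1 EB1 !mem_cat.
- by rewrite !mem_cat memm; apply: contra hnw1; rewrite Ew1 EB1 !mem_cat.
Qed.
End Cls.

Lemma inv_der (M : Type) (op : M -> M -> M) (e : M) (a b t : nat) :
  is_monoid op e -> a != b -> a != t -> b != t ->
  lambda_term op e (class_btab a b t) ->
  forall Sigma n N0,
  (forall st, st \in Sigma -> satisfies op e st.1 st.2) ->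
  (forall st y, st \in Sigma -> y \in st.1 ++ st.2 -> y < N0) ->
  N0 < n -> 1 < n ->
  forall u v, derivable Sigma u v -> (inS n u <-> inS n v).
Proof.
move=> Hm hab hat hbt Hlam Sigma n N0 Hsnd HN HN0 Hn1 u v.
elim=> {u v} [u|u v _ IH|u v w _ IH1 _ IH2|p q s st Hst].
- by [].
- by split => /IH.
- by split => [/IH1 /IH2|/IH2 /IH1].
split.
- apply: (step_inS Hm hab hat hbt Hlam (Hsnd _ Hst) _ HN0 Hn1).
  by move=> y yl; apply: (HN _ _ Hst); rewrite mem_cat yl.
- apply: (step_inS Hm hab hat hbt Hlam (sat_sym (Hsnd _ Hst)) _ HN0 Hn1).
  by move=> y yl; apply: (HN _ _ Hst); rewrite mem_cat yl orbT.
Qed.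

Lemma memF (y : nat) (s : seq nat) : (y \in flatten [seq [:: i; i] | i <- s]) = (y \in s).
Proof. by elim: s => [|x s IH] //=; rewrite !inE IH orbA orbb. Qed.

Lemma lhs_inS n : 1 < n -> inS n (idn_lhs n).
Proof.
move=> Hn1; have n0 : (n == 0) = false by case: n Hn1.
rewrite /idn_lhs /squares_prefix.
set F := flatten _.
have memFn : forall y, (y \in F) = (0 < y < n).
  by move=> y; rewrite /F memF mem_iota add1n prednK // ltnW.
split.
- move=> c; rewrite /= !inE mem_cat memFn !inE.
  by case: c => [|c] //=; case: (ltngtP c.+1 n).
- move=> i j hi hij hjn.
  have hi_n : i < n := leq_trans hij hjn.
  have hin : i <= n.-1 by rewrite -ltnS (ltn_predK hi_n).
  have Ei : iota 1 n.-1 = iota 1 i ++ iota i.+1 (n.-1 - i).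
    by rewrite -{1}(subnKC hin) iotaD add1n.
  rewrite /F Ei map_cat flatten_cat -cat_cons -catA precb_cat.
  have hX : ~~ has (pred1 j) (0 :: flatten [seq [:: k; k] | k <- iota 1 i]).
    rewrite has_pred1 inE memF mem_iota negb_or add1n ltnS.
    by rewrite -lt0n (leq_trans hi (ltnW hij)) /= -ltnNge hij.
  have hY : ~~ has (pred1 i) (flatten [seq [:: k; k] | k <- iota i.+1 (n.-1 - i)] ++ [:: n; n; 0]).
    rewrite has_pred1 mem_cat memF mem_iota ltnn /= !inE negb_or.
    by rewrite (ltn_eqF hi_n) /= -lt0n hi.
  by rewrite (precb_noD _ hX) (precb_noC _ hY) hX.
- have h1 : 1 \in F by rewrite memFn.
  by rewrite cat_cons /= has_cat has_pred1 h1.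
exists [::], (F ++ [:: n; n; 0]); split => //.
split.
- have h0 : ~~ has (pred1 0) F by rewrite has_pred1 memFn.
  rewrite precb_cat (precb_noD _ h0) h0 /=.
  by rewrite eqxx n0.
- by rewrite mem_cat !inE eqxx orbT.
- by rewrite mem_cat !inE eqxx !orbT.
Qed.

Lemma rhs_notinS n : 1 < n -> ~ inS n (idn_rhs n).
Proof.
move=> Hn1 [_ _ _ [w1 [w2 [E h0 _ [Hp _ _]]]]].
move: E; rewrite /idn_rhs /squares_prefix.
case: w1 h0 => [|c w1] /=; last by move=> h0 [E _]; move: h0; rewrite E inE eqxx.
move=> _ [E]; move: Hp; rewrite -E.
set F := flatten _.
rewrite -[F ++ _]/(F ++ [:: n; 0] ++ [:: n]) catA => /ord_contra; apply.
  by rewrite has_pred1 mem_cat !inE eqxx !orbT.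
by rewrite has_pred1 inE.
Qed.

Theorem mainTheorem11 (M : Type) (op : M -> M -> M) (e : M) :
  is_monoid op e ->
  (forall n : nat, 1 <= n -> satisfies op e (idn_lhs n) (idn_rhs n)) ->
  (exists a b t : nat, [/\ a != b, a != t, b != t &
     lambda_term op e (class_btab a b t)]) ->
  ~ finitely_based op e.
Proof.
move=> Hm Hid [a [b [t [hab hat hbt Hlam]]]] [Sigma [Hsnd Hcmp]].
pose N0 := (foldr maxn 0 (flatten [seq st.1 ++ st.2 | st <- Sigma])).+1.
have HN : forall st y, st \in Sigma -> y \in st.1 ++ st.2 -> y < N0.
  move=> st y stS yst; rewrite ltnS; apply: mem_le_foldr.
  by apply/flatten_mapP; exists st.
have Hn1 : 1 < N0.+1 by [].
have Hd := Hcmp _ _ (Hid N0.+1 isT).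
have := inv_der Hm hab hat hbt Hlam Hsnd HN (ltnSn N0) Hn1 Hd.
case=> /(_ (lhs_inS Hn1)) H _.
exact: (rhs_notinS Hn1 H).
Qed.
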